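(* Let $\mathcal{C}$ be a category and $A$ an object of $\mathcal{C}$ with $D(A)<\infty$. Then $D(A)=SD(A)$.
   Context: In a category $\mathcal{C}$, $X\leqslant^d Y$ means there are morphisms $f:X\to Y$, $g:Y\to X$ with $g\circ f=\mathrm{id}_X$. $X<^s Y$ means $X\leqslant^d Y$ holds but $Y\leqslant^d X$ fails; $X<^p Y$ means $X\leqslant^d Y$ and $X\not\cong Y$. A chain (resp. $s$-chain) of length $k$ for $A$ is $X_k<^p\cdots<^p X_1\leqslant^d A$ (resp. $X_k<^s\cdots<^s X_1\leqslant^d A$); the depth $D(A)$ (resp. strong depth $SD(A)$) is the supremum of their lengths. *)

(* Defs.v *)
From Stdlib Require Import Arith.

Record Category := {
  Obj : Type;
  Hom : Obj -> Obj -> Type;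
  comp : forall X Y Z : Obj, Hom Y Z -> Hom X Y -> Hom X Z;
  id : forall X : Obj, Hom X X;
  comp_assoc : forall (W X Y Z : Obj) (h : Hom Y Z) (g : Hom X Y) (f : Hom W X),
      comp W Y Z h (comp W X Y g f) = comp W X Z (comp X Y Z h g) f;
  comp_id_l : forall (X Y : Obj) (f : Hom X Y), comp X Y Y (id Y) f = f;
  comp_id_r : forall (X Y : Obj) (f : Hom X Y), comp X X Y f (id X) = f
}.

Arguments comp {c X Y Z} _ _.
Arguments id {c} X.

Section Depth.
Variable C : Category.

Definition retract_le (X Y : Obj C) : Prop :=
  exists (f : Hom C X Y) (g : Hom C Y X), comp g f = id X.

Definition isomorphic (X Y : Obj C) : Prop :=
  exists (f : Hom C X Y) (g : Hom C Y X), comp g f = id X /\ comp f g = id Y.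

Definition lt_s (X Y : Obj C) : Prop := retract_le X Y /\ ~ retract_le Y X.

Definition lt_p (X Y : Obj C) : Prop := retract_le X Y /\ ~ isomorphic X Y.

(* A chain of length k for A w.r.t. a strict relation lt:
   X_{k-1} lt ... lt X_0 <=^d A  (0-indexed; k = 0 is the empty chain). *)
Definition has_chain_rel (lt : Obj C -> Obj C -> Prop) (A : Obj C) (k : nat) : Prop :=
  exists X : nat -> Obj C,
    (0 < k -> retract_le (X 0) A) /\
    (forall i, S i < k -> lt (X (S i)) (X i)).

Definition has_chain := has_chain_rel lt_p.
Definition has_s_chain := has_chain_rel lt_s.

(* Supremum of a set of naturals in nat ∪ {∞} (None = ∞). *)
Definition is_sup_nat (P : nat -> Prop) (d : option nat) : Prop :=
  match d with
  | Some n => P n /\ (forall k, P k -> k <= n)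
  | None => forall n, exists k, P k /\ n < k
  end.

Definition depth_is (A : Obj C) (d : option nat) : Prop := is_sup_nat (has_chain A) d.
Definition strong_depth_is (A : Obj C) (d : option nat) : Prop :=
  is_sup_nat (has_s_chain A) d.

End Depth.

(* Main.v *)
Require Import Defs.
From Stdlib Require Import Arith Lia Bool.

Lemma sup_ext (P Q : nat -> Prop) (d : option nat) :
  (forall k, P k <-> Q k) -> is_sup_nat P d -> is_sup_nat Q d.
Proof.
  intros H. destruct d as [n|]; simpl.
  - intros [H1 H2]. split; [apply H; exact H1|]. intros k Hk; apply H2, H, Hk.
  - intros H1 m. destruct (H1 m) as [k [Hk Hl]]. exists k; split; [apply H|]; auto.
Qed.

Lemma s_to_p (C : Category) (A : Obj C) k : has_s_chain C A k -> has_chain C A k.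
Proof.
  intros [X [H0 H1]]. exists X; split; auto.
  intros i Hi. destruct (H1 i Hi) as [Hr Hn]. split; auto.
  intros [f [g [E1 E2]]]. apply Hn. exists g, f. exact E2.
Qed.

Lemma p_to_s (C : Category) (A : Obj C) n :
  depth_is C A (Some n) -> forall k, has_chain C A k -> has_s_chain C A k.
Proof.
  intros [_ Hmax] k [X [H0 H1]]. exists X; split; auto.
  intros i Hi. destruct (H1 i Hi) as [Hr Hn]. split; auto.
  intros Hback.
  assert (Hp2 : lt_p C (X i) (X (S i))).
  { split; auto. intros [f [g [E1 E2]]]. apply Hn. exists g, f. split; auto. }
  set (Y := fun j => if j <=? i then X j
                     else if Nat.even (j - i) then X i else X (S i)).
  assert (HY : has_chain C A (S n)).
  { exists Y. split.
    - intros _. unfold Y. simpl. apply H0. lia.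
    - intros j Hj. unfold Y.
      destruct (Nat.leb_spec (S j) i) as [Hle|Hgt].
      + rewrite (proj2 (Nat.leb_le j i)) by lia. apply H1. lia.
      + destruct (Nat.leb_spec j i) as [Hle2|Hgt2].
        * assert (j = i) by lia. subst j.
          replace (S i - i) with 1 by lia. simpl. apply H1; auto.
        * replace (S j - i) with (S (j - i)) by lia.
          rewrite Nat.even_succ, <- Nat.negb_even.
          destruct (Nat.even (j - i)); simpl; auto. }
  specialize (Hmax _ HY). lia.
Qed.

Theorem corollary2p16 (C : Category) (A : Obj C) :
  (exists n : nat, depth_is C A (Some n)) ->
  forall d : option nat, depth_is C A d <-> strong_depth_is C A d.
Proof.
  intros [n Hn] d.
  assert (E : forall k, has_chain C A k <-> has_s_chain C A k).
  { intros k; split; [apply (p_to_s C A n Hn)|apply s_to_p]. }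
  unfold depth_is, strong_depth_is. split; apply sup_ext; firstorder.
Qed.
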